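(* Let $X$ be a set, $T:X\to X$ a map, and $G$ a finite group acting on $X$ such that $g\circ T=T\circ g$ for all $g\in G$. Let $H\leqslant G$ and let $x\in X_{[H]}$ be a periodic point of $T$. Then there exists $k\in\Delta(N_G(H)/H)$ such that (i) $\mathfrak{O}_T(x)$ shortens in length by a factor of $\frac1k$, and (ii) $\mathfrak{O}_T(x)$ glues to $\frac{[G:H]}{k}$ orbits (including itself).
   Context: For $x\in X$, $\mathfrak{O}_T(x)=\{T^j(x):j\geqslant0\}$ and $\mathfrak{O}_G(x)=\{g(x):g\in G\}$. $G_x=\{g\in G:g(x)=x\}$ is the stabilizer of $x$; $N_G(H)=\{g\in G: gHg^{-1}=H\}$ is the normalizer; $[H]=\{gHg^{-1}:g\in G\}$ is the conjugacy class of $H$; $X_{[H]}=\{x\in X: G_x\in[H]\}$. For a finite group $K$, $\Delta(K)=\{|\langle h\rangle|: h\in K\}$ is the set of orders of elements of $K$. Let $X'=G\backslash X$, $\pi(x)=\mathfrak{O}_G(x)$, and $T'(\mathfrak{O}_G(x))=\mathfrak{O}_G(T(x))$ the induced map. ''$\mathfrak{O}_T(x)$ shortens in length by a factor of $\frac1k$'' means $|\mathfrak{O}_{T'}(\pi(x))|=\frac1k|\mathfrak{O}_T(x)|$. ''$\mathfrak{O}_T(x)$ glues to $m$ orbits (including itself)'' means there are exactly $m$ distinct closed $T$-orbits $\mathfrak{O}_T(y)$ with $\pi(\mathfrak{O}_T(y))=\pi(\mathfrak{O}_T(x))$. *)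

(* Defs.v *)
From HB Require Import structures.
From mathcomp Require Import all_boot all_fingroup.
From mathcomp Require Import boolp.
Set Implicit Arguments. Unset Strict Implicit. Unset Printing Implicit Defensive.

(* Sets over an arbitrary type X are predicates X -> Prop; two sets are equal
   when equal as functions (extensional, via funext/propext). *)
Section Defs.
Variable X : Type.

Definition card_is (Y : Type) (A : Y -> Prop) (n : nat) : Prop :=
  exists f : 'I_n -> Y, injective f /\ (forall y, A y <-> exists i, f i = y).

Definition orbitT (T : X -> X) (x : X) : X -> Prop :=
  fun y => exists j : nat, y = iter j T x.

Definition periodic (T : X -> X) (x : X) : Prop :=
  exists n, 0 < n /\ iter n T x = x.

Variable gT : finGroupType.

Definition is_left_action (G : {set gT}) (act : gT -> X -> X) : Prop :=
  (forall x, act 1%g x = x) /\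
  (forall g h x, g \in G -> h \in G -> act g (act h x) = act (g * h)%g x).

(* G-orbit O_G(x) = pi(x), a point of X' = G\X *)
Definition orbitG (G : {set gT}) (act : gT -> X -> X) (x : X) : X -> Prop :=
  fun y => exists2 g, g \in G & y = act g x.

Definition stab (G : {set gT}) (act : gT -> X -> X) (x : X) : {set gT} :=
  [set g in G | `[< act g x = x >]].

Definition in_XH (G H : {set gT}) (act : gT -> X -> X) (x : X) : Prop :=
  exists2 g, g \in G & stab G act x = (H :^ g)%g.

(* orbit of pi(x) under the induced map T' : O_{T'}(pi x) = {pi(T^j x)} *)
Definition orbitT' (G : {set gT}) (act : gT -> X -> X) (T : X -> X) (x : X)
  : (X -> Prop) -> Prop :=
  fun S => exists j : nat, S = orbitG G act (iter j T x).

Definition piset (G : {set gT}) (act : gT -> X -> X) (A : X -> Prop)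
  : (X -> Prop) -> Prop :=
  fun S => exists2 y, A y & S = orbitG G act y.

Definition glued (G : {set gT}) (act : gT -> X -> X) (T : X -> X) (x : X)
  : (X -> Prop) -> Prop :=
  fun O => exists y, periodic T y /\ O = orbitT T y /\
     piset G act (orbitT T y) = piset G act (orbitT T x).

End Defs.

(* Main.v *)
Require Import Defs.
From HB Require Import structures.
From mathcomp Require Import all_boot all_fingroup.
From mathcomp Require Import all_solvable boolp zify.

Set Implicit Arguments.
Section Helpers.
Variables (X : Type) (T : X -> X) (gT : finGroupType) (G : {group gT})
  (act : gT -> X -> X).
Hypothesis Hact : is_left_action G act.
Hypothesis Hcomm : forall g y, g \in G -> act g (T y) = T (act g y).

Lemma act1' y : act 1%g y = y.
Proof. by case: Hact. Qed.

Lemma actM' g h y : g \in G -> h \in G -> act g (act h y) = act (g * h)%g y.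
Proof. by case: Hact => _; apply. Qed.

Lemma actV' b y : b \in G -> act b^-1%g (act b y) = y.
Proof. by move=> bG; rewrite actM' ?groupV // mulVg act1'. Qed.

Lemma iter_act j b y : b \in G -> iter j T (act b y) = act b (iter j T y).
Proof. by move=> bG; elim: j => [//|j IH]; rewrite !iterS IH Hcomm. Qed.

Lemma iter_per y p m : iter p T y = y -> iter (m * p) T y = y.
Proof. by move=> hp; elim: m => [//|m IH]; rewrite mulSn iterD IH hp. Qed.

Lemma orbitG_act b w : b \in G -> orbitG G act (act b w) = orbitG G act w.
Proof.
move=> bG; apply: funext => z; apply: propext; split.
  by case=> c cG ->; exists (c * b)%g; rewrite ?groupM // actM'.
case=> c cG ->; exists (c * b^-1)%g; first by rewrite groupM ?groupV.
by rewrite -actM' ?groupV // actV'.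
Qed.

Lemma orbitT_mem y p j : 0 < p -> iter p T y = y ->
  orbitT T (iter j T y) = orbitT T y.
Proof.
move=> p0 hp; apply: funext => z; apply: propext; split.
  by case=> i ->; exists (i + j); rewrite iterD.
case=> i ->; exists (i + j * p.-1).
by rewrite -iterD -addnA -mulnSr prednK // iterD iter_per.
Qed.

End Helpers.
Unset Implicit Arguments.
Arguments act1' {X gT G act}.
Arguments actM' {X gT G act}.
Arguments actV' {X gT G act}.
Arguments iter_act {X T gT G act} Hcomm j [b y].
Arguments iter_per {X T y p}.
Arguments orbitG_act {X gT G act}.
Arguments orbitT_mem {X T y p}.

Theorem lemma6 (X : Type) (T : X -> X) (gT : finGroupType) (G H : {group gT})
  (act : gT -> X -> X) :
  is_left_action G act ->
  (forall g y, g \in G -> act g (T y) = T (act g y)) ->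
  H \subset G ->
  forall x : X, in_XH G H act x -> periodic T x ->
  exists k : nat,
    (exists2 h, h \in ('N_G(H) / H)%g & k = #[h]%g) /\
    (exists n n' : nat,
        card_is (orbitT T x) n /\ card_is (orbitT' G act T x) n' /\ n' * k = n) /\
    (exists m : nat, card_is (glued G act T x) m /\ m * k = #|G : H|%g).
Proof.
move=> Hact Hcomm HsubG x [g gG Hstab] [p [p0 Hp]].
have act1 := act1' Hact; have actM := actM' Hact; have actV := actV' Hact.
have iter_act := iter_act Hcomm.
have orbitG_act := orbitG_act Hact.
pose P := fun j => `[< 0 < j /\ iter j T x = x >].
have exP : exists j, P j by exists p; apply/asboolP.
case: (ex_minnP exP) => n /asboolP [n0 Hn] nmin.
have nminP : forall m, 0 < m -> iter m T x = x -> n <= m.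
  by move=> m m0 hm; apply: nmin; apply/asboolP.
have iterM : forall m, iter (m %% n) T x = iter m T x.
  by move=> m; rewrite {2}(divn_eq m n) addnC iterD iter_per.
have dvdP : forall m, (n %| m) <-> iter m T x = x.
  move=> m; split; first by case/dvdnP => q ->; apply: iter_per.
  move=> h; rewrite /dvdn; apply/eqP; case E: (m %% n) => [//|r].
  have := nminP r.+1 isT; rewrite -E iterM h => /(_ erefl).
  by have := ltn_pmod m n0; rewrite E; lia.
pose P' := fun j => `[< 0 < j /\ exists2 b, b \in G & iter j T x = act b x >].
have exP' : exists j, P' j by exists n; apply/asboolP; split=> //; exists 1%g; rewrite ?act1.
case: (ex_minnP exP') => n' /asboolP [n'0 [a aG Ha]] n'min.
have iter_a : forall i, iter (i * n') T x = act (a ^+ i)%g x.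
  elim=> [|i IH]; first by rewrite mul0n /= expg0 act1.
  by rewrite mulSn iterD IH iter_act ?groupX // Ha actM ?groupX // -expgSr.
have decomp : forall j, iter j T x = act (a ^+ (j %/ n'))%g (iter (j %% n') T x).
  by move=> j; rewrite {1}(divn_eq j n') addnC iterD iter_a iter_act ?groupX.
have Pdiv : forall j b, b \in G -> iter j T x = act b x -> n' %| j.
  move=> j b bG hj; rewrite /dvdn; apply/eqP; case E: (j %% n') => [//|r].
  exfalso.
  have : n' <= r.+1.
    apply: n'min; apply/asboolP; split=> //.
    exists ((a ^+ (j %/ n'))^-1 * b)%g; first by rewrite groupM ?groupV ?groupX.
    by rewrite -E -actM ?groupV ?groupX // -hj [iter j T x]decomp actV ?groupX.
  by have := ltn_pmod j n'0; rewrite E; lia.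
have n'n : n' %| n by apply: (Pdiv n 1%g); rewrite ?group1 // act1 Hn.
pose S := (H :^ g)%G.
have Sdef : forall b, (b \in S) = (b \in G) && `[< act b x = x >].
  by move=> b; rewrite /= -Hstab /stab inE.
have inS : forall b, b \in G -> (b \in S) <-> act b x = x.
  by move=> b bG; rewrite Sdef bG /=; split=> [/asboolP|/asboolP].
have SG : S \subset G by apply/subsetP => b; rewrite Sdef => /andP[].
have aN : a \in 'N(S)%g.
  rewrite inE; apply/subsetP => y; rewrite mem_conjg => hy.
  move: hy; set b := (y ^ a^-1)%g => hy.
  have bG : b \in G := subsetP SG _ hy.
  have hb : act b x = x by apply/inS.
  have yE : y = (b ^ a)%g by rewrite /b conjgKV.
  clearbody b.
  have yG : y \in G by rewrite yE groupJ.
  apply/inS => //; rewrite yE conjgE -!actM ?groupV ?groupM //.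
  by rewrite -Ha -iter_act // hb Ha actV.
have aN' : (a ^ g^-1)%g \in 'N(H)%g.
  by have : a \in 'N(H :^ g)%g := aN; rewrite normJ mem_conjg.
pose h := coset H (a ^ g^-1)%g.
have ordh : forall j, (#[h]%g %| j) = ((a ^+ j)%g \in S).
  move=> j; rewrite order_dvdn /h -morphX //= -conjXg.
  have memS : forall y, (y \in S) = ((y ^ g^-1)%g \in H) by move=> y; exact: mem_conjg.
  rewrite memS; apply/eqP/idP => [/coset_idr|/coset_id] //.
  by apply; rewrite conjXg groupX.
have ordc : forall j, (#[coset S a]%g %| j) = ((a ^+ j)%g \in S).
  move=> j; rewrite order_dvdn -morphX //=.
  apply/eqP/idP => [/coset_idr|/coset_id] //.
  by apply; rewrite groupX.
have kk : #[h]%g = #[coset S a]%g.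
  by apply/eqP; rewrite eqn_dvd ordh -ordc dvdnn /= ordc -ordh dvdnn.
have Key : forall j, (n %| j * n') = (#[h]%g %| j).
  move=> j; rewrite ordh; apply/idP/idP.
    by move/dvdP; rewrite iter_a => /inS; apply; rewrite groupX.
  by move/inS => /(_ (groupX _ aG)) hj; apply/dvdP; rewrite iter_a.
exists #[h]%g.
split.
  by exists h => //; rewrite /h mem_quotient // inE groupJ ?groupV // aN'.
have n'len : n' <= n := dvdn_leq n0 n'n.
split.
  exists n, n'; split; [|split].
  - exists (fun i : 'I_n => iter i T x); split.
      have aux : forall i i' : nat, i < i' -> i' < n -> iter i T x = iter i' T x -> False.
        move=> i i' lt1 lt2 e.
        have : iter (n - i' + i) T x = x.
          by rewrite iterD e -iterD subnK ?Hn // ltnW.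
        move/(nminP _ _); lia.
      move=> i i' e; apply: val_inj => /=.
      case: (ltngtP i i') => // lt; exfalso.
        exact: (aux _ _ lt (ltn_ord _) e).
      exact: (aux _ _ lt (ltn_ord _) (esym e)).
    move=> y; split.
      by case=> j ->; exists (Ordinal (ltn_pmod j n0)); rewrite /= iterM.
    by case=> i <-; exists i.
  - exists (fun i : 'I_n' => orbitG G act (iter i T x)); split.
      have aux : forall i i' : nat, i < i' -> i' < n' ->
          orbitG G act (iter i T x) = orbitG G act (iter i' T x) -> False.
        move=> i i' lt1 lt2 e.
        have : orbitG G act (iter i' T x) (iter i' T x) by exists 1%g; rewrite ?act1.
        rewrite -e => -[c cG hc].
        have : iter (i' - i) T x = act c x.
          have e1 : iter (n - i + i') T x = iter (i' - i) T x.
            have -> : n - i + i' = (i' - i) + n by lia.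
            by rewrite iterD Hn.
          have ilen : i <= n by lia.
          by rewrite -e1 iterD hc iter_act // -iterD subnK ?Hn.
        move/(Pdiv _ _ cG) => /(dvdn_leq); lia.
      move=> i i' e; apply: val_inj => /=.
      case: (ltngtP i i') => // lt; exfalso.
        exact: (aux _ _ lt (ltn_ord _) e).
      exact: (aux _ _ lt (ltn_ord _) (esym e)).
    move=> Y; split.
      case=> j ->; exists (Ordinal (ltn_pmod j n'0)).
      by rewrite /= [iter j T x]decomp orbitG_act ?groupX.
    by case=> i <-; exists i.
  - have q0 : 0 < n %/ n' by rewrite divn_gt0 // n'len.
    have hq : #[h]%g = n %/ n'.
      apply/eqP; rewrite eqn_dvd -Key divnK // dvdnn /=.
      have := Key #[h]%g; rewrite dvdnn => /idP.
      by rewrite -{1}(divnK n'n) dvdn_pmul2r.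
    by rewrite hq mulnC divnK.
pose K := (<[a]> <*> S)%G.
have KE : (K :=: <[a]> * S)%g by rewrite /= norm_joinEl // cycle_subG.
have KG : K \subset G by rewrite join_subG cycle_subG aG SG.
have KN : K \subset 'N(S)%g by rewrite join_subG cycle_subG aN normG.
have SK : S \subset K by apply: joing_subr.
have per : forall b, b \in G -> iter n T (act b x) = act b x.
  by move=> b bG; rewrite iter_act // Hn.
have Kchar : forall b, b \in G -> (b \in K) <-> exists j, act b x = iter j T x.
  move=> b bG; split.
    rewrite KE => /mulsgP [c s /cycleP [i ->] sS ->].
    have sG : s \in G := subsetP SG _ sS.
    exists (i * n'); rewrite iter_a -actM ?groupX //.
    by move/(inS _ sG): sS => ->.
  case=> j hj.
  have := Pdiv j b bG (esym hj); case/dvdnP => q jq.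
  rewrite jq iter_a in hj.
  have sS : ((a ^+ q)^-1 * b)%g \in S.
    by apply/inS; rewrite ?groupM ?groupV ?groupX // -actM ?groupV ?groupX // hj actV ?groupX.
  by rewrite KE -(mulKVg (a ^+ q)%g b) mem_mulg // mem_cycle.
have Eq : forall b c, b \in G -> c \in G ->
    (orbitT T (act b x) = orbitT T (act c x)) <-> (b^-1 * c)%g \in K.
  move=> b c bG cG; split.
    move=> e.
    have : orbitT T (act c x) (act c x) by exists 0.
    rewrite -e => -[j hj].
    apply/Kchar; first by rewrite groupM ?groupV.
    by exists j; rewrite -actM ?groupV // hj iter_act // actV.
  move=> /Kchar; rewrite groupM ?groupV // => /(_ isT) [j hj].
  have hc : act c x = iter j T (act b x).
    by rewrite iter_act // -hj actM ?groupM ?groupV // mulKVg.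
  by rewrite hc (@orbitT_mem _ _ _ n) ?per.
have CK : forall C, C \in lcosets K G -> repr C \in G /\ C = (repr C *: K)%g.
  move=> C /lcosetsP [b bG ->].
  have rC : repr (b *: K)%g \in (b *: K)%g by apply: mem_repr (lcoset_refl _ _).
  split; last by apply/esym/lcoset_eqP.
  move: rC; rewrite mem_lcoset => rK.
  by rewrite -(mulKVg b (repr _)) groupM // (subsetP KG).
exists #|lcosets K G|; split.
  exists (fun i => orbitT T (act (repr (enum_val i)) x)); split.
    move=> i i' e; apply: enum_val_inj.
    have [rG CE] := CK _ (enum_valP i).
    have [r'G C'E] := CK _ (enum_valP i').
    rewrite CE C'E; apply/lcoset_eqP; rewrite mem_lcoset.
    by apply/Eq.
  move=> O; split.
    case=> y [py [-> hpi]].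
    have : piset G act (orbitT T y) (orbitG G act y) by exists y => //; exists 0.
    rewrite hpi => -[z [j ->] hz].
    have : orbitG G act y y by exists 1%g; rewrite ?act1.
    rewrite hz => -[b bG ->].
    have CL : (b *: K)%g \in lcosets K G by apply/lcosetsP; exists b.
    exists (enum_rank_in CL (b *: K)%g); rewrite enum_rankK_in //.
    have [rG CE] := CK _ CL.
    rewrite -iter_act // (@orbitT_mem _ _ _ n) ?per //.
    apply/Eq => //; rewrite -mem_lcoset -CE; exact: lcoset_refl.
  case=> i <-.
  have [rG _] := CK _ (enum_valP i).
  set r := repr _ in rG *.
  exists (act r x); split; first by exists n; rewrite per.
  split => //.
  apply: funext => Y; apply: propext; split.
    case=> z [j ->] ->; exists (iter j T x); first by exists j.
    by rewrite iter_act // orbitG_act.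
  case=> z [j ->] ->; exists (iter j T (act r x)); first by exists j.
  by rewrite iter_act // orbitG_act.
rewrite card_lcosets.
apply/eqP; rewrite -(eqn_pmul2l (cardG_gt0 S)).
have LS := Lagrange SK; have LK := Lagrange KG; have LH := Lagrange HsubG.
rewrite kk orderE -quotient_cycle // -quotientMidr -KE card_quotient //.
by rewrite mulnCA LS mulnC LK -LH /= cardJg.
Qed.
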